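(* Let $f:\mathbb{R}^n\to\mathbb{R}$ be convex, with the constants $L_{i,j}$ and $L_j$ as in the context. Then for any $j\in\{1,\dots,n\}$ and all $x',x''\in\mathcal F$, \[ \bigl\|[\nabla f(x')-\nabla_j f(x')e]-[\nabla f(x'')-\nabla_j f(x'')e]\bigr\|_{\langle j\rangle} \le L_j\,\|x'-x''\|_{\langle j\rangle}. \]
   Context: $n\ge2$; $\mathcal F=\{x\in\mathbb{R}^n: e^Tx=b,\ l_i\le x_i\le u_i\}$ with $e$ the all-ones vector, $b\in\mathbb{R}$, $l_i\in\mathbb{R}\cup\{-\infty\}$, $u_i\in\mathbb{R}\cup\{+\infty\}$, $l_i<u_i$. $f$ is continuously differentiable with Lipschitz continuous gradient on $\mathbb{R}^n$. For $i\ne j$, $L_{i,j}>0$ are constants such that for every $x\in\mathbb{R}^n$ and $s,t\in\mathbb{R}$, $|\nabla f(x+s(e_i-e_j))^T(e_i-e_j)-\nabla f(x+t(e_i-e_j))^T(e_i-e_j)|\le L_{i,j}|s-t|$ ($e_i$ the $i$th unit vector); $L_{i,i}=0$. $L_j=\sum_{i=1}^nL_{i,j}$. For $j$ fixed, $\langle x,y\rangle_j=\sum_{i\ne j}x_iy_i$ and $\|x\|_{\langle j\rangle}=\sqrt{\langle x,x\rangle_j}$. *)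

(* Defs.v *)
From HB Require Import structures.
From mathcomp Require Import all_boot all_order all_algebra.
From mathcomp Require Import all_classical all_reals all_analysis.
Set Implicit Arguments.
Unset Strict Implicit.
Unset Printing Implicit Defensive.
Import Order.TTheory GRing.Theory Num.Theory.
Import numFieldNormedType.Exports.
Local Open Scope ring_scope.

Definition dotv {R : realType} {n : nat} (x y : 'rV[R]_n) : R :=
  \sum_(k < n) x 0 k * y 0 k.

Definition unitv {R : realType} {n : nat} (i : 'I_n) : 'rV[R]_n :=
  \row_(k < n) (if k == i then 1 else 0).

Definition onesv {R : realType} {n : nat} : 'rV[R]_n := \row_(k < n) 1.

Definition dotj {R : realType} {n : nat} (j : 'I_n) (x y : 'rV[R]_n) : R :=
  \sum_(i < n | i != j) x 0 i * y 0 i.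
Definition normj {R : realType} {n : nat} (j : 'I_n) (x : 'rV[R]_n) : R :=
  Num.sqrt (dotj j x x).

Definition feasible {R : realType} {n : nat} (b : R) (l u : 'I_n -> \bar R)
  (x : 'rV[R]_n) : Prop :=
  dotv onesv x = b /\ forall i, (l i <= (x 0 i)%:E)%E /\ ((x 0 i)%:E <= u i)%E.

Definition convex_fun {R : realType} {n : nat} (f : 'rV[R]_n -> R) : Prop :=
  forall (x y : 'rV[R]_n) (t : R), 0 <= t <= 1 ->
    f (t *: x + (1 - t) *: y) <= t * f x + (1 - t) * f y.

(* Main.v *)
Require Import Defs.
From HB Require Import structures.
From mathcomp Require Import all_boot all_order all_algebra.
From mathcomp Require Import all_classical all_reals all_analysis.
From mathcomp Require Import ring lra.
Import Order.TTheory GRing.Theory Num.Theory.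
Import numFieldNormedType.Exports.
Local Open Scope classical_set_scope.
Local Open Scope ring_scope.

Lemma quad_ub (R : realType) (phi dphi : R -> R) (L : R) :
  (forall t, is_derive t (1:R) phi (dphi t)) ->
  (forall t, `|dphi t - dphi 0| <= L * `|t|) ->
  forall s, phi s <= phi 0 + s * dphi 0 + L / 2 * s ^+ 2.
Proof.
move=> dP lip s.
set a := dphi 0.
pose psi := phi - (fun t => a * t + L / 2 * t ^+ 2).
have dpsi t : is_derive t (1:R) psi (dphi t - (a + L * t)).
  rewrite /psi.
  apply: is_derive_eq.
  rewrite -[a%:A]/(a * 1) -[t%:A]/(t*1) -[(L/2) *: _]/(L/2 * _); lra.
have cpsi : forall u v : R, {within [set` `[u, v]%R], continuous psi}.
  move=> u v; apply: derivable_within_continuous => x _.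
  by case: (dpsi x).
suff : psi s <= psi 0.
  have e t : psi t = phi t - (a * t + L / 2 * t ^+ 2) by [].
  rewrite !e expr0n /= !mulr0 addr0 subr0 lerBlDr => H.
  apply: (le_trans H); rewrite (mulrC a); lra.
case: (ltgtP s 0) => [sl0|sg0|->]; last by [].
- have [c /andP[c1 c2] E] := MVT sl0 (fun x _ => dpsi x) (cpsi _ _).
  move: c1 c2; rewrite !bnd_simp => c1 c2.
  rewrite -subr_ge0 E; apply: mulr_ge0; last by lra.
  have := lip c; rewrite (ltr0_norm c2) ler_norml => /andP[h1 h2]; rewrite /a; lra.
- have [c /andP[c1 c2] E] := MVT sg0 (fun x _ => dpsi x) (cpsi _ _).
  move: c1 c2; rewrite !bnd_simp => c1 c2.
  rewrite -subr_le0 E; apply: mulr_le0_ge0; last by lra.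
  have := lip c; rewrite (gtr0_norm c1) ler_norml => /andP[h1 h2]; rewrite /a; lra.
Qed.
Lemma line_derive (R : realType) (n : nat) (f : 'rV[R]_n -> R) (grad : 'rV[R]_n -> 'rV[R]_n)
  (hdiff : forall x, differentiable f x /\ forall v, 'd f x v = dotv (grad x) v)
  (x w : 'rV[R]_n) (t : R) :
  is_derive t (1:R) (fun s => f (x + s *: w)) (dotv (grad (x + t *: w)) w).
Proof.
have E : (fun h : R => h^-1 *: (((fun s => f (x + s *: w)) \o shift t) (h *: (1:R)) - f (x + t *: w)))
   = (fun h : R => h^-1 *: ((f \o shift (x + t *: w)) (h *: w) - f (x + t *: w))).
  apply/funext => h /=; congr (_ *: (f _ - _)).
  by rewrite -[h%:A]/(h * 1) mulr1 scalerDl addrCA addrA.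
have [d1 d2] := hdiff (x + t *: w).
split.
  by rewrite /derivable E; apply: diff_derivable.
by rewrite /derive E -/(derive f _ w) deriveE.
Qed.
Lemma grad_ineq (R : realType) (n : nat) (f : 'rV[R]_n -> R) (grad : 'rV[R]_n -> 'rV[R]_n)
  (hdiff : forall x, differentiable f x /\ forall v, 'd f x v = dotv (grad x) v)
  (hconv : convex_fun f) (x v : 'rV[R]_n) :
  f x + dotv (grad x) v <= f (x + v).
Proof.
have [d1 d2] := hdiff x.
rewrite -d2 -deriveE // addrC -lerBrDr.
set q := fun h : R => h^-1 *: ((f \o shift x) (h *: v) - f x).
have cq : cvg (q @ 0^') by apply: diff_derivable.
rewrite /derive -/q (cvg_at_rightE q) //.
have cq' : cvg (q @ 0^'+).
  have sub : (0:R)^'+ `=>` (0:R)^'.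
    move=> A /nbhs_ballP [_ /posnumP[e] xe_A].
    by exists e%:num => //= y xe_y /gt_eqF/negbT/xe_A; exact.
  apply: (cvgP (lim (q @ 0^'))); apply: cvg_trans cq; exact: cvg_app.
apply: limr_le => //.
near=> h.
have h0 : 0 < h by near: h; exact: nbhs_right_gt.
have h1 : h <= 1 by near: h; exact: (@nbhs_right_le R 0 1 ltr01).
rewrite /q /= -[h^-1 *: _]/(h^-1 * _) ler_pdivrMl // .
have := hconv (x + v) x h.
rewrite ltW ?h1 // => /(_ isT).
have -> : h *: (x + v) + (1 - h) *: x = h *: v + x.
  by rewrite scalerDr scalerBl scale1r addrC addrA subrK addrC.
move=> H; lra.
Unshelve. all: end_near.
Qed.
Lemma jensen (R : realType) (n : nat) (F : 'rV[R]_n -> R) (hc : convex_fun F)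
  (I : eqType) (s : seq I) : forall (w : I -> R) (p : I -> 'rV[R]_n),
  (forall i, 0 <= w i) -> \sum_(i <- s) w i = 1 ->
  F (\sum_(i <- s) w i *: p i) <= \sum_(i <- s) w i * F (p i).
Proof.
elim: s => [|a s IH] w p w0.
  by rewrite big_nil => /eqP; rewrite eq_sym oner_eq0.
rewrite !big_cons => sw.
set S := \sum_(i <- s) w i.
have S0 : 0 <= S by apply: sumr_ge0.
have [SE|SN] := eqVneq S 0.
  have := SE; rewrite /S => /eqP; rewrite psumr_eq0 // => /allP al.
  have e1 : \sum_(i <- s) w i *: p i = 0.
    rewrite big_seq big1 // => i /al /eqP ->; by rewrite scale0r.
  have e2 : \sum_(i <- s) w i * F (p i) = 0.
    rewrite big_seq big1 // => i /al /eqP ->; by rewrite mul0r.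
  have wa : w a = 1 by move: sw; rewrite -/S SE addr0.
  by rewrite e1 e2 wa !addr0 scale1r mul1r.
have Sp : 0 < S by rewrite lt_def SN.
have wa : w a = 1 - S by move: sw; rewrite -/S => <-; rewrite addrK.
have IH' := IH (fun i => w i / S) p (fun i => divr_ge0 (w0 i) S0).
rewrite -mulr_suml -/S divff // in IH'.
have e : \sum_(i <- s) w i *: p i = S *: \sum_(i <- s) (w i / S) *: p i.
  rewrite scaler_sumr; apply: eq_bigr => i _.
  by rewrite scalerA mulrCA divff ?mulr1.
rewrite e.
have := hc (p a) (\sum_(i <- s) (w i / S) *: p i) (w a).
rewrite w0 wa lerBlDr lerDl S0 /= => /(_ isT).
rewrite (_ : 1 - (1 - S) = S); last by lra.
move=> H.
apply: (le_trans H); rewrite lerD2l.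
have e3 : \sum_(i <- s) w i * F (p i) = S * \sum_(i <- s) (w i / S) * F (p i).
  rewrite mulr_sumr; apply: eq_bigr => i _.
  by rewrite mulrA mulrCA mulrV ?mulr1 // unitfE.
rewrite e3; apply: ler_wpM2l => //; exact: IH'.
Qed.

Lemma dotvDr {R : realType} {n : nat} (x a b : 'rV[R]_n) : dotv x (a + b) = dotv x a + dotv x b.
Proof. by rewrite /dotv -big_split; apply: eq_bigr => i _; rewrite mxE mulrDr. Qed.
Lemma dotvZr {R : realType} {n : nat} (x a : 'rV[R]_n) (c : R) : dotv x (c *: a) = c * dotv x a.
Proof. by rewrite /dotv mulr_sumr; apply: eq_bigr => i _; rewrite mxE mulrCA. Qed.
Lemma dotvDl {R : realType} {n : nat} (x a b : 'rV[R]_n) : dotv (a + b) x = dotv a x + dotv b x.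
Proof. by rewrite /dotv -big_split; apply: eq_bigr => i _; rewrite mxE mulrDl. Qed.
Lemma dotvNl {R : realType} {n : nat} (x a : 'rV[R]_n) : dotv (- a) x = - dotv a x.
Proof. by rewrite /dotv -sumrN; apply: eq_bigr => i _; rewrite mxE mulNr. Qed.
Lemma dotvBl {R : realType} {n : nat} (x a b : 'rV[R]_n) : dotv (a - b) x = dotv a x - dotv b x.
Proof. by rewrite dotvDl dotvNl. Qed.
Lemma dotvC {R : realType} {n : nat} (a b : 'rV[R]_n) : dotv a b = dotv b a.
Proof. by apply: eq_bigr => i _; rewrite mulrC. Qed.
Lemma dotv_sumr {R : realType} {n : nat} (x : 'rV[R]_n) (I : Type) (s : seq I) (F : I -> 'rV[R]_n) :
  dotv x (\sum_(i <- s) F i) = \sum_(i <- s) dotv x (F i).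
Proof.
elim: s => [|a s IH]; first by rewrite !big_nil /dotv big1 // => i _; rewrite mxE mulr0.
by rewrite !big_cons dotvDr IH.
Qed.
Lemma dotv_unit {R : realType} {n : nat} (x : 'rV[R]_n) (i : 'I_n) : dotv x (unitv i) = x 0 i.
Proof.
rewrite /dotv (bigD1 i) //= big1 ?addr0; first by rewrite mxE eqxx mulr1.
by move=> k /negPf ki; rewrite mxE ki mulr0.
Qed.
Lemma dotv_ge0 {R : realType} {n : nat} (a : 'rV[R]_n) : 0 <= dotv a a.
Proof. by apply: sumr_ge0 => i _; rewrite -expr2 sqr_ge0. Qed.
Lemma dotv_j {R : realType} {n : nat} (j : 'I_n) (a b : 'rV[R]_n) : b 0 j = 0 -> dotv a b = dotj j a b.
Proof. by move=> bj; rewrite /dotv (bigD1 j) //= bj mulr0 add0r. Qed.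
Lemma dotj_ge0 {R : realType} {n : nat} (j : 'I_n) (a : 'rV[R]_n) : 0 <= dotj j a a.
Proof. by apply: sumr_ge0 => i _; rewrite -expr2 sqr_ge0. Qed.

Definition wv {R : realType} {n : nat} (j i : 'I_n) : 'rV[R]_n := unitv i - unitv j.
Definition Tv {R : realType} {n : nat} (j : 'I_n) (d : 'rV[R]_n) : 'rV[R]_n := \sum_(i < n) d 0 i *: wv j i.
Definition Dv {R : realType} {n : nat} (grad : 'rV[R]_n -> 'rV[R]_n) (j : 'I_n) (x : 'rV[R]_n) : 'rV[R]_n :=
  grad x - grad x 0 j *: onesv.

Lemma Dv_j {R : realType} {n : nat} (grad : 'rV[R]_n -> 'rV[R]_n) (j : 'I_n) (x : 'rV[R]_n) : Dv grad j x 0 j = 0.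
Proof. by rewrite /Dv !mxE mulr1 subrr. Qed.

Lemma dotv_wv {R : realType} {n : nat} (x : 'rV[R]_n) (j i : 'I_n) : dotv x (wv j i) = x 0 i - x 0 j.
Proof. by rewrite /wv dotvDr -scaleN1r dotvZr !dotv_unit mulN1r. Qed.

Lemma dotv_Tv {R : realType} {n : nat} (grad : 'rV[R]_n -> 'rV[R]_n) (j : 'I_n) (x d : 'rV[R]_n) : dotv (grad x) (Tv j d) = dotv (Dv grad j x) d.
Proof.
rewrite /Tv dotv_sumr [RHS]/dotv; apply: eq_bigr => i _.
rewrite dotvZr dotv_wv /Dv !mxE mulr1 mulrC //.
Qed.

Lemma TvD {R : realType} {n : nat} (j : 'I_n) (a b : 'rV[R]_n) : Tv j (a + b) = Tv j a + Tv j b.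
Proof. by rewrite /Tv -big_split; apply: eq_bigr => i _; rewrite mxE scalerDl. Qed.
Lemma TvZ {R : realType} {n : nat} (j : 'I_n) (c : R) (a : 'rV[R]_n) : Tv j (c *: a) = c *: Tv j a.
Proof. by rewrite /Tv scaler_sumr; apply: eq_bigr => i _; rewrite mxE scalerA. Qed.
Lemma Qub {R : realType} {n : nat} (j : 'I_n) (f : 'rV[R]_n -> R)
  (grad : 'rV[R]_n -> 'rV[R]_n)
  (hdiff : forall x, differentiable f x /\ forall v, 'd f x v = dotv (grad x) v)
  (hconv : convex_fun f)
  (L : 'I_n -> 'I_n -> R)
  (hLpos : forall i j, i != j -> 0 < L i j)
  (hLdiag : forall i, L i i = 0)
  (hLij : forall i j, i != j -> forall (x : 'rV[R]_n) (s t : R),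
     `| dotv (grad (x + s *: (unitv i - unitv j))) (unitv i - unitv j)
      - dotv (grad (x + t *: (unitv i - unitv j))) (unitv i - unitv j) |
     <= L i j * `|s - t|)
  (Mpos : 0 < \sum_(i < n) L i j) (x d : 'rV[R]_n) (dj : d 0 j = 0) :
  f (x + Tv j d) <= f x + dotv (grad x) (Tv j d) + (\sum_(i < n) L i j) / 2 * dotv d d.
Proof.
set M := \sum_(i < n) L i j.
have M0 : M != 0 by rewrite gt_eqF.
pose lam i := L i j / M.
pose s i := M * d 0 i / L i j.
pose p i := x + s i *: wv j i.
have lam0 i : 0 <= lam i.
  apply: divr_ge0; last exact: ltW.
  have [->|ij] := eqVneq i j; first by rewrite hLdiag.
  exact: ltW (hLpos _ _ ij).
have lam1 : \sum_(i < n) lam i = 1 by rewrite /lam -mulr_suml divff.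
have e1 : \sum_(i < n) lam i *: p i = x + Tv j d.
  rewrite /p; under eq_bigr do rewrite scalerDr.
  rewrite big_split /= -scaler_suml lam1 scale1r /Tv; congr (_ + _).
  apply: eq_bigr => i _; rewrite scalerA; have [->|ij] := eqVneq i j.
    by rewrite /wv subrr !scaler0.
  congr (_ *: _); rewrite /lam /s; field.
  by rewrite M0 gt_eqF ?hLpos.
have J := @jensen _ _ _ hconv _ (index_enum 'I_n) lam p lam0 lam1.
rewrite e1 in J; apply: (le_trans J).
have qb i : f (p i) <= f x + s i * dotv (grad x) (wv j i) + L i j / 2 * s i ^+ 2.
  have := @quad_ub _ _ _ (L i j) (@line_derive _ _ f grad hdiff x (wv j i)) _ (s i).
  rewrite scale0r addr0; apply.
  move=> t; have [->|ij] := eqVneq i j.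
    rewrite /wv subrr hLdiag mul0r.
    by rewrite -(scale0r (0 : 'rV[R]_n)) !dotvZr !mul0r subrr normr0.
  by have := hLij i j ij x t 0; rewrite scale0r addr0 subr0.
apply: le_trans (_ : \sum_(i < n) lam i * (f x + s i * dotv (grad x) (wv j i) + L i j / 2 * s i ^+ 2) <= _).
  by apply: ler_sum => i _; apply: ler_wpM2l.
under eq_bigr do rewrite !mulrDr.
rewrite big_split big_split /= -mulr_suml lam1 mul1r.
rewrite -!addrA lerD2l /Tv dotv_sumr [dotv d d]/dotv mulr_sumr -!big_split /=; rewrite le_eqVlt; apply/orP; left; apply/eqP; apply: eq_bigr => i _.
rewrite dotvZr /lam /s; have [->|ij] := eqVneq i j.
  by rewrite dj hLdiag !(mul0r, mulr0, add0r).
field. by rewrite M0 gt_eqF ?hLpos.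
Qed.
Lemma dotvZl {R : realType} {n : nat} (x a : 'rV[R]_n) (c : R) : dotv (c *: a) x = c * dotv a x.
Proof. by rewrite dotvC dotvZr dotvC. Qed.

Lemma cocoer {R : realType} {n : nat} (j : 'I_n) (f : 'rV[R]_n -> R)
  (grad : 'rV[R]_n -> 'rV[R]_n)
  (hdiff : forall x, differentiable f x /\ forall v, 'd f x v = dotv (grad x) v)
  (hconv : convex_fun f)
  (L : 'I_n -> 'I_n -> R)
  (hLpos : forall i j, i != j -> 0 < L i j)
  (hLdiag : forall i, L i i = 0)
  (hLij : forall i j, i != j -> forall (x : 'rV[R]_n) (s t : R),
     `| dotv (grad (x + s *: (unitv i - unitv j))) (unitv i - unitv j)
      - dotv (grad (x + t *: (unitv i - unitv j))) (unitv i - unitv j) |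
     <= L i j * `|s - t|)
  (Mpos : 0 < \sum_(i < n) L i j) (x v r : 'rV[R]_n)
  (er : r = Dv grad j (x + Tv j v) - Dv grad j x) :
  dotv r r <= (\sum_(i < n) L i j) * dotv r v.
Proof.
set M := \sum_(i < n) L i j in Mpos *.
set y := x + Tv j v.
have rj : r 0 j = 0.
  by rewrite er !mxE !mulr1 !subrr.
have rj' c : (c *: r) 0 j = 0 by rewrite mxE rj mulr0.
set K := M^-1.
have KM : K * M = 1 by rewrite mulVf ?gt_eqF.
have QB := @Qub R n j f grad hdiff hconv L hLpos hLdiag hLij Mpos.
have G := @grad_ineq R n f grad hdiff hconv.
have H1 := G x (Tv j (v + (- K) *: r)).
have H2 := QB y ((- K) *: r) (rj' _).
have H3 := G y (Tv j ((- 1) *: v + K *: r)).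
have H4 := QB x (K *: r) (rj' _).
have e2 : y + Tv j ((- K) *: r) = x + Tv j (v + (- K) *: r) by rewrite /y TvD addrA.
have e4 : x + Tv j (K *: r) = y + Tv j ((- 1) *: v + K *: r).
  by rewrite /y TvD !TvZ scaleN1r addrA -(addrA x) subrr addr0.
rewrite e2 in H2; rewrite e4 in H4.
rewrite !dotv_Tv !dotvDr !dotvZr !dotvZl ?dotvZr in H1 H2 H3 H4.
rewrite -/M in H2 H4.
rewrite !(mulNr, mulrN) opprK in H2.
have eA : dotv r r = dotv (Dv grad j y) r - dotv (Dv grad j x) r by rewrite {1}er dotvBl.
have eC : dotv r v = dotv (Dv grad j y) v - dotv (Dv grad j x) v by rewrite {1}er dotvBl.
set a1 := dotv (Dv grad j x) v in H1 H3 H4 eC.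
set a2 := dotv (Dv grad j x) r in H1 H3 H4 eA.
set b1 := dotv (Dv grad j y) v in H2 H3 eC.
set b2 := dotv (Dv grad j y) r in H2 H3 eA.
set A := dotv r r in H2 H4 eA *.
set C := dotv r v in eC *.
have H : a1 - b1 + 2 * (K * b2 - K * a2) <= M * K * (K * A) by lra.
have f1 : M * K * (K * A) = K * A by rewrite (mulrC M) KM mul1r.
have f2 : K * b2 - K * a2 = K * A by rewrite eA mulrBr.
rewrite f1 f2 in H.
have HC : K * A <= C by rewrite eC; lra.
have Mp : 0 <= M by apply: ltW.
by have := ler_wpM2l Mp HC; rewrite mulrA (mulrC M) KM mul1r.
Qed.
Lemma dotj_expand {R : realType} {n : nat} (j : 'I_n) (a b : 'rV[R]_n) (c : R) :
  dotj j (a - c *: b) (a - c *: b) = dotj j a a - 2 * c * dotj j a b + c ^+ 2 * dotj j b b.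
Proof.
rewrite /dotj !mulr_sumr -sumrB -big_split /=; apply: eq_bigr => i _; rewrite !mxE; ring.
Qed.

Lemma TvE {R : realType} {n : nat} (j : 'I_n) (v : 'rV[R]_n) :
  Tv j v = v - dotv onesv v *: unitv j.
Proof.
apply/rowP => k; rewrite /Tv summxE !mxE.
under eq_bigr do rewrite !mxE.
under eq_bigr do rewrite mulrBr.
rewrite sumrB (bigD1 k) //= eqxx mulr1 big1 ?addr0; last first.
  by move=> i /negPf ik; rewrite eq_sym ik mulr0.
congr (_ - _); rewrite -mulr_suml /dotv; congr (_ * _).
by apply: eq_bigr => i _; rewrite mxE mul1r.
Qed.
Theorem lemma3 (R : realType) (n : nat) (hn : (2 <= n)%N)
  (b : R) (l u : 'I_n -> \bar R)
  (hl : forall i, l i != +oo%E) (hu : forall i, u i != -oo%E)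
  (hlu : forall i, (l i < u i)%E)
  (f : 'rV[R]_n -> R) (grad : 'rV[R]_n -> 'rV[R]_n)
  (hdiff : forall x, differentiable f x /\ forall v, 'd f x v = dotv (grad x) v)
  (hgcont : continuous grad)
  (hlip : exists K : R, forall x y, `|grad x - grad y| <= K * `|x - y|)
  (hconv : convex_fun f)
  (L : 'I_n -> 'I_n -> R)
  (hLpos : forall i j, i != j -> 0 < L i j)
  (hLdiag : forall i, L i i = 0)
  (hLij : forall i j, i != j -> forall (x : 'rV[R]_n) (s t : R),
     `| dotv (grad (x + s *: (unitv i - unitv j))) (unitv i - unitv j)
      - dotv (grad (x + t *: (unitv i - unitv j))) (unitv i - unitv j) |
     <= L i j * `|s - t|) :
  forall (j : 'I_n) (x' x'' : 'rV[R]_n),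
    feasible b l u x' -> feasible b l u x'' ->
    normj j ((grad x' - grad x' 0 j *: onesv) - (grad x'' - grad x'' 0 j *: onesv))
      <= (\sum_(i < n) L i j) * normj j (x' - x'').
Proof.
move=> j x' x'' [s1 _] [s2 _].
set M := \sum_(i < n) L i j.
have [k kj] : exists k : 'I_n, k != j.
  have h0 : (0 < n)%N by apply: leq_trans hn.
  have h1 : (1 < n)%N by [].
  have [e|ne] := eqVneq (Ordinal h0) j.
    by exists (Ordinal h1); rewrite -e -(inj_eq val_inj).
  by exists (Ordinal h0).
have Lge0 i : 0 <= L i j.
  by have [->|ij] := eqVneq i j; [rewrite hLdiag | exact: ltW (hLpos _ _ ij)].
have Mpos : 0 < M.
  rewrite /M (bigD1 k) //=.
  have := hLpos k j kj; have : 0 <= \sum_(i < n | i != k) L i j by apply: sumr_ge0.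
  lra.
set v := x' - x''.
have ev : x'' + Tv j v = x'.
  rewrite TvE (_ : dotv onesv v = 0) ?scale0r ?subr0; first by rewrite /v addrC subrK.
  rewrite /v /dotv; under eq_bigr do rewrite !mxE mulrBr. rewrite sumrB.
  have e y : dotv onesv y = \sum_i 1 * y 0 i by apply: eq_bigr => i _; rewrite mxE.
  by rewrite -!e s1 s2 subrr.
set r := Dv grad j x' - Dv grad j x''.
have er : r = Dv grad j (x'' + Tv j v) - Dv grad j x'' by rewrite ev.
have H := @cocoer _ _ j f grad hdiff hconv L hLpos hLdiag hLij Mpos x'' v r er.
rewrite -/M in H.
have rj : r 0 j = 0 by rewrite /r !mxE !mulr1 !subrr.
have e3 : dotv r v = dotj j r v by rewrite /dotv (bigD1 j) //= rj mul0r add0r.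
rewrite (@dotv_j _ _ j r r rj) e3 in H.
have H2 := dotj_ge0 j (r - M *: v).
rewrite dotj_expand in H2.
have H3 : dotj j r r <= M ^+ 2 * dotj j v v.
  nra.
rewrite /normj -[M in M * _](ger0_norm (ltW Mpos)) -sqrtr_sqr -sqrtrM ?sqr_ge0 //.
exact: ler_wsqrtr.
Qed.
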